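(* Let $\omega\in\mathbb{R}$, let $f$ and $f_0=f'$ be as in the context, and let $T\in(1,t_m]$. Let $\rho>0$ and $v^i$ be $C^1$ on $[1,T)\times(\mathbb{R}^3\setminus\{0\})$ and solve $\partial_t\rho+\partial_i(\rho v^i)=0$ with $\rho|_{t=1}=\frac{\iota^3}{6\pi}(1+\beta\mathcal d(|\mathbf x|))$, and let $s\in C^1$ solve $$\partial_ts+v^i\partial_is=-\Big(\frac23+\omega\Big)\partial_i\check v^i+\frac{2\check v^ix_i}{|\mathbf x|^2},\qquad s|_{t=1}=\ln\Big(\frac{(1+\beta\mathcal d(|\mathbf x|))^{2/3+\omega}}{(1+\beta)^{\omega}}|\mathbf x|^2\Big),$$ where $\check v^i:=v^i-\big(\frac{2}{3t}-\frac{f_0}{3(1+f)}\big)x^i$. Assume every point of $[1,T)\times(\mathbb{R}^3\setminus\{0\})$ lies on an integral curve of $\partial_t+v^i\partial_i$ starting on $\{t=1\}$. Then, with $\varrho:=\rho/\mathring\rho-1$ and $\mathring\rho=\frac{\iota^3}{6\pi t^2}$, $$s=\ln\Big(t^{-4/3}\frac{(1+\varrho)^{2/3+\omega}}{(1+f)^{\omega}}|\mathbf x|^2\Big),\qquad\text{and hence}\qquad p=Ke^s\rho^{4/3}=Kt^{-4/3}\frac{(1+\varrho)^{2/3+\omega}}{(1+f)^{\omega}}|\mathbf x|^2\rho^{4/3}.$$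
   Context: $f\in C^2([1,t_m))$ solves $f''+\frac{4}{3t}f'-\frac{2}{3t^2}f(1+f)-\frac{4(f')^2}{3(1+f)}=0$, $f(1)=\beta>0$, $f'(1)=3(1+\beta)\gamma$, $\gamma>0$, on its maximal interval $[1,t_m)$; $K>0$ and $\iota\in(0,1)$ are constants; $\mathcal d:(0,\infty)\to\mathbb{R}$ with $1+\beta\mathcal d>0$; $|\mathbf x|^2=\delta_{kl}x^kx^l$, $x_i=\delta_{ij}x^j$, summation convention. *)

(* Defs.v *)
From Stdlib Require Import Reals.
From Coquelicot Require Import Coquelicot.
Open Scope R_scope.

Definition nrm2 (x1 x2 x3 : R) : R := x1 ^ 2 + x2 ^ 2 + x3 ^ 2.

Definition inD (T : Rbar) (t x1 x2 x3 : R) : Prop :=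
  1 <= t /\ Rbar_lt (Finite t) T /\ nrm2 x1 x2 x3 <> 0.

Definition is_deriv_in (a : R) (b : Rbar) (h : R -> R) (t l : R) : Prop :=
  filterlim (fun s => (h s - h t) / (s - t))
    (within (fun s => a <= s /\ Rbar_le (Finite s) b /\ s <> t) (locally t))
    (locally l).

(* derivative relative to [1, +oo): one-sided at t = 1, usual derivative for t > 1 *)
Definition is_deriv_ge1 (h : R -> R) (t l : R) : Prop :=
  is_deriv_in 1 p_infty h t l.

Definition cont_on_from1 (tm : Rbar) (h : R -> R) : Prop :=
  forall t, 1 <= t -> Rbar_lt (Finite t) tm ->
  forall eps, 0 < eps -> exists del, 0 < del /\
    forall s, 1 <= s -> Rbar_lt (Finite s) tm -> Rabs (s - t) < del ->
      Rabs (h s - h t) < eps.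

Definition ode_sol (tm : Rbar) (beta gamma : R) (f f0 : R -> R) : Prop :=
  exists f1 : R -> R,
    (forall t, 1 <= t -> Rbar_lt (Finite t) tm ->
       is_deriv_ge1 f t (f0 t) /\ is_deriv_ge1 f0 t (f1 t) /\ 1 + f t <> 0 /\
       f1 t + 4 / (3 * t) * f0 t - 2 / (3 * t ^ 2) * (f t * (1 + f t))
         - 4 * (f0 t) ^ 2 / (3 * (1 + f t)) = 0) /\
    cont_on_from1 tm f1 /\
    f 1 = beta /\ f0 1 = 3 * (1 + beta) * gamma.

Definition ode_maximal (tm : Rbar) (beta gamma : R) (f f0 : R -> R) : Prop :=
  ode_sol tm beta gamma f f0 /\
  forall (tm' : Rbar) (g g0 : R -> R), Rbar_lt tm tm' ->
    ode_sol tm' beta gamma g g0 ->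
    (forall t, 1 <= t -> Rbar_lt (Finite t) tm -> g t = f t) -> False.

(* fields on [1,T) x (R^3\{0}) are curried functions  g t x1 x2 x3 *)
Definition field := R -> R -> R -> R -> R.

Definition pd_t (g : field) t x1 x2 x3 l := is_deriv_ge1 (fun s => g s x1 x2 x3) t l.
Definition pd_1 (g : field) t x1 x2 x3 l := is_derive (fun y => g t y x2 x3) x1 l.
Definition pd_2 (g : field) t x1 x2 x3 l := is_derive (fun y => g t x1 y x3) x2 l.
Definition pd_3 (g : field) t x1 x2 x3 l := is_derive (fun y => g t x1 x2 y) x3 l.

Definition cont_on_D (T : Rbar) (g : field) : Prop :=
  forall t x1 x2 x3, inD T t x1 x2 x3 ->
  forall eps, 0 < eps -> exists del, 0 < del /\
    forall s y1 y2 y3, inD T s y1 y2 y3 ->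
      Rabs (s - t) < del -> Rabs (y1 - x1) < del -> Rabs (y2 - x2) < del ->
      Rabs (y3 - x3) < del ->
      Rabs (g s y1 y2 y3 - g t x1 x2 x3) < eps.

Definition C1_on_D (T : Rbar) (g : field) : Prop :=
  exists gt g1 g2 g3 : field,
    (forall t x1 x2 x3, inD T t x1 x2 x3 ->
       pd_t g t x1 x2 x3 (gt t x1 x2 x3) /\ pd_1 g t x1 x2 x3 (g1 t x1 x2 x3) /\
       pd_2 g t x1 x2 x3 (g2 t x1 x2 x3) /\ pd_3 g t x1 x2 x3 (g3 t x1 x2 x3)) /\
    cont_on_D T g /\ cont_on_D T gt /\ cont_on_D T g1 /\ cont_on_D T g2 /\
    cont_on_D T g3.

(* Main.v *)
Require Import Defs.
From Stdlib Require Import Reals Lra.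
From Coquelicot Require Import Coquelicot.
Open Scope R_scope.

Definition Fw (a b t : R) := within (fun s => a <= s /\ Rbar_le (Finite s) (Finite b) /\ s <> t) (locally t).
Global Instance Fw_filter a b t : Filter (Fw a b t) := within_filter _ _ _ (@filter_filter _ _ (locally_filter t)).

Lemma lim_intro {T} (F : (T -> Prop) -> Prop) {FF : Filter F} (f : T -> R) l :
  (forall e, 0 < e -> F (fun x => Rabs (f x - l) < e)) -> filterlim f F (locally l).
Proof. intros H. apply filterlim_locally. intros [e He]. apply (H e He). Qed.

Lemma lim_elim {T} (F : (T -> Prop) -> Prop) {FF : Filter F} (f : T -> R) l :
  filterlim f F (locally l) -> forall e, 0 < e -> F (fun x => Rabs (f x - l) < e).
Proof. intros H e He. exact (proj1 (filterlim_locally f l) H (mkposreal e He)). Qed.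

Lemma Fw_elim a b t P : Fw a b t P -> exists d, 0 < d /\ forall s, a <= s <= b -> s <> t -> Rabs (s - t) < d -> P s.
Proof. intros [[d Hd] H]. exists d; split; auto. intros s Hs Hst Hd'. apply H. exact Hd'.
  split; [lra|split; [simpl; lra|auto]]. Qed.

Lemma Fw_intro a b t (P : R -> Prop) : (exists d, 0 < d /\ forall s, a <= s <= b -> s <> t -> Rabs (s - t) < d -> P s) -> Fw a b t P.
Proof. intros [d [Hd H]]. exists (mkposreal d Hd). intros s Hb [H1 [H2 H3]]. simpl in H2.
  apply H; auto. Qed.

Lemma Fw_dom a b t : Fw a b t (fun s => a <= s <= b /\ s <> t).
Proof. apply Fw_intro. exists 1. split. lra. intros; auto. Qed.

Lemma Fw_id a b t : filterlim (fun s => s) (Fw a b t) (locally t).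
Proof. apply (lim_intro (Fw a b t) (fun s => s)). intros e He. apply Fw_intro. exists e. split; auto. Qed.

Lemma lim_plus {T} (F : (T -> Prop) -> Prop) {FF : Filter F} (f g : T -> R) a b :
  filterlim f F (locally a) -> filterlim g F (locally b) -> filterlim (fun x => f x + g x) F (locally (a + b)).
Proof. intros Hf Hg. exact (filterlim_comp_2 f g Rplus Hf Hg (@filterlim_plus R_AbsRing R_NormedModule a b)). Qed.

Lemma lim_mult {T} (F : (T -> Prop) -> Prop) {FF : Filter F} (f g : T -> R) a b :
  filterlim f F (locally a) -> filterlim g F (locally b) -> filterlim (fun x => f x * g x) F (locally (a * b)).
Proof. intros Hf Hg. exact (filterlim_comp_2 f g Rmult Hf Hg (@filterlim_mult R_AbsRing a b)). Qed.

Lemma lim_const {T} (F : (T -> Prop) -> Prop) {FF : Filter F} (c : R) :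
  filterlim (fun _ : T => c) F (locally c).
Proof. apply filterlim_const. Qed.

Lemma D_ext a b (h k : R -> R) t l l' : (forall s, h s = k s) -> l = l' ->
  is_deriv_in a (Finite b) h t l -> is_deriv_in a (Finite b) k t l'.
Proof. intros Hhk Hl H. subst l'. unfold is_deriv_in in *. eapply filterlim_ext; [|exact H].
  intros s; simpl. rewrite !Hhk. reflexivity. Qed.

Lemma D_plus a b (h k : R -> R) t l m : is_deriv_in a (Finite b) h t l -> is_deriv_in a (Finite b) k t m ->
  is_deriv_in a (Finite b) (fun s => h s + k s) t (l + m).
Proof. intros H1 H2. unfold is_deriv_in in *.
  eapply filterlim_ext; [|exact (lim_plus (Fw a b t) _ _ _ _ H1 H2)].
  intros s; simpl. unfold Rdiv; ring. Qed.

Lemma D_scal a b (h : R -> R) k t l : is_deriv_in a (Finite b) h t l ->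
  is_deriv_in a (Finite b) (fun s => k * h s) t (k * l).
Proof. intros H1. unfold is_deriv_in in *.
  eapply filterlim_ext; [|exact (lim_mult (Fw a b t) _ _ _ _ (lim_const (Fw a b t) k) H1)].
  intros s; simpl. unfold Rdiv; ring. Qed.

Lemma D_const a b k t : is_deriv_in a (Finite b) (fun _ => k) t 0.
Proof. unfold is_deriv_in.
  eapply filterlim_ext; [|exact (lim_const (Fw a b t) 0)].
  intros s; simpl. unfold Rdiv; ring. Qed.

Lemma D_idf a b t : is_deriv_in a (Finite b) (fun s => s) t 1.
Proof. unfold is_deriv_in.
  eapply filterlim_ext_loc; [|exact (lim_const (Fw a b t) 1)].
  generalize (Fw_dom a b t). apply filter_imp. intros s [_ Hs]. simpl. field. lra. Qed.

Lemma D_cont a b h t l : is_deriv_in a (Finite b) h t l ->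
  forall e, 0 < e -> exists d, 0 < d /\ forall s, a <= s <= b -> Rabs (s - t) < d -> Rabs (h s - h t) < e.
Proof. intros H e He. destruct (Fw_elim _ _ _ _ (lim_elim _ _ _ H 1 Rlt_0_1)) as [d0 [Hd0 H0]].
  assert (Hl : 0 < Rabs l + 1) by (pose proof (Rabs_pos l); lra).
  exists (Rmin d0 (e / (Rabs l + 1))). split. apply Rmin_pos; auto. apply Rdiv_lt_0_compat; auto.
  intros s Hs Hst. destruct (Req_dec s t) as [->|Hne].
  - replace (h t - h t) with 0 by ring. rewrite Rabs_R0; auto.
  - assert (Hm1 := Rmin_l d0 (e / (Rabs l + 1))). assert (Hm2 := Rmin_r d0 (e / (Rabs l + 1))).
    specialize (H0 s Hs Hne ltac:(lra)). simpl in H0.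
    set (q := (h s - h t) / (s - t)) in *.
    assert (Hq : h s - h t = q * (s - t)) by (unfold q; field; lra).
    rewrite Hq, Rabs_mult.
    assert (Rabs q < Rabs l + 1) by (pose proof (Rabs_triang_inv q l); lra).
    assert (e / (Rabs l + 1) * (Rabs l + 1) = e) by (field; lra).
    pose proof (Rabs_pos q). pose proof (Rabs_pos (s - t)). nra.
Qed.

Lemma D_cont_lim a b h t l : is_deriv_in a (Finite b) h t l -> filterlim h (Fw a b t) (locally (h t)).
Proof. intros H. apply (lim_intro (Fw a b t) h). intros e He. apply Fw_intro.
  destruct (D_cont _ _ _ _ _ H e He) as [d [Hd Hc]]. exists d; split; auto. Qed.

Lemma D_comp (a b : R) (g h : R -> R) (t gp l : R) : is_derive g (h t) gp -> is_deriv_in a (Finite b) h t l ->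
  is_deriv_in a (Finite b) (fun s => g (h s)) t (gp * l).
Proof. intros Hg H.
  set (phi := fun y => if Req_EM_T y (h t) then gp else (g y - g (h t)) / (y - h t)).
  assert (Hphi : filterlim phi (locally (h t)) (locally gp)).
  { apply (lim_intro (locally (h t)) phi). intros e He. apply is_derive_Reals in Hg. destruct (Hg e He) as [d Hd].
    exists d. intros y Hy. change (Rabs (y - h t) < d) in Hy. unfold phi. destruct Req_EM_T as [E|E].
    - replace (gp - gp) with 0 by ring. rewrite Rabs_R0; auto.
    - specialize (Hd (y - h t) ltac:(lra) Hy). rewrite Rplus_minus in Hd. exact Hd. }
  unfold is_deriv_in.
  eapply filterlim_ext_loc; [|exact (lim_mult (Fw a b t) _ _ _ _ (filterlim_comp _ _ _ _ _ _ _ _ (D_cont_lim _ _ _ _ _ H) Hphi) H)].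
  generalize (Fw_dom a b t). apply filter_imp. intros s [_ Hs].
  assert (E0 : phi (h s) * ((h s - h t) / (s - t)) = (g (h s) - g (h t)) / (s - t)).
  { unfold phi. destruct Req_EM_T as [E|E].
    - rewrite E. unfold Rdiv; ring.
    - field. lra. }
  exact E0.
Qed.

Lemma D_restrict a (b b' : Rbar) h t l : (forall s, Rbar_le (Finite s) b -> Rbar_le (Finite s) b') ->
  is_deriv_in a b' h t l -> is_deriv_in a b h t l.
Proof. intros Hb H. unfold is_deriv_in in *. eapply filterlim_filter_le_1; [|exact H].
  intros P HP. unfold within in *. eapply filter_imp; [|exact HP]. simpl.
  intros x Hx [H1 [H2 H3]]. apply Hx. repeat split; auto. apply (Hb x H2). Qed.

Lemma nz_near x1 x2 x3 : nrm2 x1 x2 x3 <> 0 -> exists r, 0 < r /\ forall y1 y2 y3,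
  Rabs (y1 - x1) < r -> Rabs (y2 - x2) < r -> Rabs (y3 - x3) < r -> nrm2 y1 y2 y3 <> 0.
Proof. intros H. unfold nrm2 in *.
  assert (Hy : forall y x, x <> 0 -> Rabs (y - x) < Rabs x -> 0 < y ^ 2).
  { intros y x Hx Hyx. apply pow2_gt_0. intros ->. rewrite Rminus_0_l, Rabs_Ropp in Hyx. lra. }
  pose proof (pow2_ge_0) as P.
  destruct (Req_dec x1 0) as [E1|E1]; [destruct (Req_dec x2 0) as [E2|E2]; [destruct (Req_dec x3 0) as [E3|E3]|]|].
  - exfalso; apply H; subst; ring.
  - exists (Rabs x3). split. apply Rabs_pos_lt; auto. intros y1 y2 y3 _ _ H3.
    specialize (Hy _ _ E3 H3). pose proof (P y1); pose proof (P y2). lra.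
  - exists (Rabs x2). split. apply Rabs_pos_lt; auto. intros y1 y2 y3 _ H2 _.
    specialize (Hy _ _ E2 H2). pose proof (P y1); pose proof (P y3). lra.
  - exists (Rabs x1). split. apply Rabs_pos_lt; auto. intros y1 y2 y3 H1 _ _.
    specialize (Hy _ _ E1 H1). pose proof (P y2); pose proof (P y3). lra.
Qed.

Lemma between_abs u u' y x0 d : Rmin u u' <= y <= Rmax u u' -> Rabs (u - x0) < d -> Rabs (u' - x0) < d -> Rabs (y - x0) < d.
Proof. intros Hy H1 H2. apply Rabs_def2 in H1. apply Rabs_def2 in H2. apply Rabs_def1;
  unfold Rmin, Rmax in Hy; destruct Rle_dec; lra. Qed.

Lemma slope (S : R -> Prop) (Q : R -> R -> R -> R -> Prop) (G G1 : R -> R -> R -> R -> R) (tau x0 w0 z0 : R) :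
 (exists r, 0 < r /\ forall s u w z, S s -> Rabs (u - x0) < r -> Rabs (w - w0) < r -> Rabs (z - z0) < r -> Q s u w z) ->
 (forall s u w z, Q s u w z -> is_derive (fun y => G s y w z) u (G1 s u w z)) ->
 (forall e, 0 < e -> exists d, 0 < d /\ forall s u w z, Q s u w z -> Rabs (s - tau) < d -> Rabs (u - x0) < d ->
     Rabs (w - w0) < d -> Rabs (z - z0) < d -> Rabs (G1 s u w z - G1 tau x0 w0 z0) < e) ->
 forall e, 0 < e -> exists d, 0 < d /\ forall s u u' w z, S s -> Rabs (s - tau) < d -> Rabs (u - x0) < d ->
   Rabs (u' - x0) < d -> Rabs (w - w0) < d -> Rabs (z - z0) < d -> u <> u' ->
   Rabs ((G s u' w z - G s u w z) / (u' - u) - G1 tau x0 w0 z0) < e.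
Proof.
 intros [r [Hr HQ]] HD HC e He. destruct (HC e He) as [d1 [Hd1 HC1]].
 exists (Rmin d1 r). split. apply Rmin_pos; auto.
 intros s u u' w z HS Hs Hu Hu' Hw Hz Huu.
 assert (Hm1 := Rmin_l d1 r); assert (Hm2 := Rmin_r d1 r).
 assert (HQ' : forall y, Rmin u u' <= y <= Rmax u u' -> Q s y w z).
 { intros y Hy. apply HQ; auto; try lra. pose proof (between_abs _ _ _ _ _ Hy Hu Hu'). lra. }
 pose proof (MVT_gen (fun y => G s y w z) u u' (fun y => G1 s y w z)) as HM. cbv zeta in HM.
 destruct HM as [xi [Hxi Heq]].
 - intros y Hy. apply HD, HQ'. lra.
 - intros y Hy. apply continuity_pt_filterlim. apply (ex_derive_continuous (fun y => G s y w z)).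
   eexists; apply HD, HQ'; auto.
 - assert (Equ : (G s u' w z - G s u w z) / (u' - u) = G1 s xi w z).
   { rewrite Heq. field. intro; apply Huu; lra. }
   rewrite Equ. apply HC1; auto; try lra. pose proof (between_abs _ _ _ _ _ Hxi Hu Hu'). lra.
Qed.

Definition clamp a b u := Rmax a (Rmin b u).

Lemma clamp_in a b u : a <= b -> a <= clamp a b u <= b.
Proof. intros. unfold clamp, Rmax, Rmin. repeat destruct Rle_dec; lra. Qed.
Lemma clamp_id a b u : a <= u <= b -> clamp a b u = u.
Proof. intros. unfold clamp, Rmax, Rmin. repeat destruct Rle_dec; lra. Qed.
Lemma clamp_lip a b u v : a <= b -> Rabs (clamp a b u - clamp a b v) <= Rabs (u - v).
Proof. intros. unfold clamp, Rmax, Rmin. repeat destruct Rle_dec;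
  unfold Rabs; repeat destruct Rcase_abs; lra. Qed.

Lemma clamp_cont a b h : a <= b ->
  (forall t, a <= t <= b -> forall e, 0 < e -> exists d, 0 < d /\ forall s, a <= s <= b -> Rabs (s - t) < d -> Rabs (h s - h t) < e) ->
  continuity (fun u => h (clamp a b u)).
Proof. intros Hab Hc x. unfold continuity_pt, continue_in, limit1_in, limit_in. simpl. unfold R_dist.
  intros e He. destruct (Hc (clamp a b x) (clamp_in a b x Hab) e He) as [d [Hd H]].
  exists d. split; auto. intros y [_ Hy]. apply H. apply clamp_in; auto.
  pose proof (clamp_lip a b y x Hab). lra. Qed.

Lemma cont_of_D a b h : (forall t, a <= t <= b -> exists l, is_deriv_in a (Finite b) h t l) ->
  forall t, a <= t <= b -> forall e, 0 < e -> exists d, 0 < d /\ forall s, a <= s <= b -> Rabs (s - t) < d -> Rabs (h s - h t) < e.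
Proof. intros H t Ht. destruct (H t Ht) as [l Hl]. exact (D_cont _ _ _ _ _ Hl). Qed.

Lemma D_zero a b h : a <= b -> (forall t, a <= t <= b -> is_deriv_in a (Finite b) h t 0) -> h b = h a.
Proof. intros Hab HD.
  assert (Hc : continuity (fun u => h (clamp a b u))).
  { apply clamp_cont; auto. apply cont_of_D. intros t Ht; exists 0; auto. }
  pose proof (MVT_gen (fun u => h (clamp a b u)) a b (fun _ => 0)) as HM. cbv zeta in HM.
  rewrite Rmin_left, Rmax_right in HM by lra.
  destruct HM as [c [Hc' Heq]].
  - intros x Hx. apply is_derive_Reals. intros e He.
    destruct (Fw_elim _ _ _ _ (lim_elim (Fw a b x) _ _ (HD x ltac:(lra)) e He)) as [d0 [Hd0 H0]].
    assert (Hpos : 0 < Rmin d0 (Rmin (x - a) (b - x))) by (repeat apply Rmin_pos; lra).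
    exists (mkposreal _ Hpos). intros k Hk0 Hk. simpl in Hk.
    assert (Hm1 := Rmin_l d0 (Rmin (x - a) (b - x))). assert (Hm2 := Rmin_r d0 (Rmin (x - a) (b - x))).
    assert (Hm3 := Rmin_l (x - a) (b - x)). assert (Hm4 := Rmin_r (x - a) (b - x)).
    apply Rabs_def2 in Hk as Hk'.
    rewrite !clamp_id by lra.
    specialize (H0 (x + k) ltac:(lra) ltac:(lra)). replace (x + k - x) with k in H0 by ring.
    apply H0. replace (x + k - x) with k by ring. lra.
  - intros x Hx. apply Hc.
  - rewrite !clamp_id in Heq by lra. lra.
Qed.

Lemma pos_prop a b h : a <= b -> (forall t, a <= t <= b -> exists l, is_deriv_in a (Finite b) h t l) ->
  (forall t, a <= t <= b -> h t <> 0) -> 0 < h a -> forall t, a <= t <= b -> 0 < h t.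
Proof. intros Hab HD Hnz Ha t Ht. destruct (Rlt_or_le 0 (h t)) as [|Hle]; auto. exfalso.
  assert (Hc : continuity (fun u => h (clamp a b u))) by (apply clamp_cont; auto; apply cont_of_D; auto).
  destruct (IVT_gen _ a t 0 Hc) as [x [Hx Hx0]].
  - rewrite !clamp_id by lra. unfold Rmin, Rmax; destruct Rle_dec; lra.
  - rewrite Rmin_left, Rmax_right in Hx by lra. rewrite clamp_id in Hx0 by lra.
    apply (Hnz x); auto; lra.
Qed.

Lemma term_lim (b tau : R) (S : R -> Prop) (Q : R -> R -> R -> R -> Prop) (G G1 : R -> R -> R -> R -> R) (x0 w0 z0 : R)
  (U U' W Z : R -> R) :
 (exists r, 0 < r /\ forall s u w z, S s -> Rabs (u - x0) < r -> Rabs (w - w0) < r -> Rabs (z - z0) < r -> Q s u w z) ->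
 (forall s u w z, Q s u w z -> is_derive (fun y => G s y w z) u (G1 s u w z)) ->
 (forall e, 0 < e -> exists d, 0 < d /\ forall s u w z, Q s u w z -> Rabs (s - tau) < d -> Rabs (u - x0) < d ->
     Rabs (w - w0) < d -> Rabs (z - z0) < d -> Rabs (G1 s u w z - G1 tau x0 w0 z0) < e) ->
 Fw 1 b tau S ->
 filterlim U (Fw 1 b tau) (locally x0) -> filterlim U' (Fw 1 b tau) (locally x0) ->
 filterlim W (Fw 1 b tau) (locally w0) -> filterlim Z (Fw 1 b tau) (locally z0) ->
 filterlim (fun s => if Req_EM_T (U' s) (U s) then G1 tau x0 w0 z0
    else (G s (U' s) (W s) (Z s) - G s (U s) (W s) (Z s)) / (U' s - U s)) (Fw 1 b tau) (locally (G1 tau x0 w0 z0)).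
Proof. intros H1 H2 H3 HS HU HU' HW HZ. apply (lim_intro (Fw 1 b tau)). intros e He.
  destruct (slope S Q G G1 tau x0 w0 z0 H1 H2 H3 e He) as [d [Hd Hs]].
  pose proof (lim_elim _ _ _ HU d Hd) as E1. pose proof (lim_elim _ _ _ HU' d Hd) as E2.
  pose proof (lim_elim _ _ _ HW d Hd) as E3. pose proof (lim_elim _ _ _ HZ d Hd) as E4.
  pose proof (lim_elim _ _ _ (Fw_id 1 b tau) d Hd) as E5.
  generalize (filter_and _ _ HS (filter_and _ _ E1 (filter_and _ _ E2 (filter_and _ _ E3 (filter_and _ _ (E4) E5))))).
  apply filter_imp. intros s [HS' [F1 [F2 [F3 [F4 F5]]]]].
  destruct Req_EM_T as [E|E].
  - rewrite Rminus_eq_0, Rabs_R0; auto.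
  - apply Hs; auto.
Qed.

Lemma slope_mul (F : R -> R) (u u' k D : R) : D <> 0 ->
  (if Req_EM_T u' u then k else (F u' - F u) / (u' - u)) * ((u' - u) / D) = (F u' - F u) / D.
Proof. intros HD. destruct Req_EM_T as [E|E].
  - subst. unfold Rdiv; ring.
  - field. split; auto. intro; apply E; lra.
Qed.

Lemma Rbar_lt_le_trans' (s b : R) (T : Rbar) : s <= b -> Rbar_lt (Finite b) T -> Rbar_lt (Finite s) T.
Proof. intros H1 H2. destruct T; simpl in *; auto; lra. Qed.

Lemma chain (T : Rbar) (b : R) (g g1 g2 g3 : field) (c1 c2 c3 : R -> R) (tau A d1 d2 d3 : R) :
  Rbar_lt (Finite b) T -> 1 <= tau <= b ->
  (forall s y1 y2 y3, inD T s y1 y2 y3 -> pd_1 g s y1 y2 y3 (g1 s y1 y2 y3) /\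
     pd_2 g s y1 y2 y3 (g2 s y1 y2 y3) /\ pd_3 g s y1 y2 y3 (g3 s y1 y2 y3)) ->
  cont_on_D T g1 -> cont_on_D T g2 -> cont_on_D T g3 ->
  nrm2 (c1 tau) (c2 tau) (c3 tau) <> 0 ->
  pd_t g tau (c1 tau) (c2 tau) (c3 tau) A ->
  is_deriv_in 1 (Finite b) c1 tau d1 -> is_deriv_in 1 (Finite b) c2 tau d2 -> is_deriv_in 1 (Finite b) c3 tau d3 ->
  is_deriv_in 1 (Finite b) (fun s => g s (c1 s) (c2 s) (c3 s)) tau
    (g1 tau (c1 tau) (c2 tau) (c3 tau) * d1 + g2 tau (c1 tau) (c2 tau) (c3 tau) * d2
     + g3 tau (c1 tau) (c2 tau) (c3 tau) * d3 + A).
Proof.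
  intros HbT Htau Hpd Hc1 Hc2 Hc3 Hnz Ht Hd1 Hd2 Hd3.
  set (x1 := c1 tau) in *. set (x2 := c2 tau) in *. set (x3 := c3 tau) in *.
  set (S := fun s => 1 <= s /\ Rbar_lt (Finite s) T).
  assert (HS : Fw 1 b tau S).
  { apply Fw_intro. exists 1. split. lra. intros s Hs _ _. split. lra. apply (Rbar_lt_le_trans' s b); auto; lra. }
  assert (HinD : inD T tau x1 x2 x3).
  { split. lra. split; auto. apply (Rbar_lt_le_trans' tau b); auto; lra. }
  destruct (nz_near x1 x2 x3 Hnz) as [r [Hr Hnr]].
  assert (Lc1 := D_cont_lim _ _ _ _ _ Hd1). assert (Lc2 := D_cont_lim _ _ _ _ _ Hd2).
  assert (Lc3 := D_cont_lim _ _ _ _ _ Hd3).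
  assert (L1 := term_lim b tau S (fun s u w z => inD T s u w z) g g1 x1 x2 x3 (fun _ => x1) c1 c2 c3).
  assert (L2 := term_lim b tau S (fun s u w z => inD T s w u z) (fun s u w z => g s w u z) (fun s u w z => g2 s w u z)
     x2 x1 x3 (fun _ => x2) c2 (fun _ => x1) c3).
  assert (L3 := term_lim b tau S (fun s u w z => inD T s w z u) (fun s u w z => g s w z u) (fun s u w z => g3 s w z u)
     x3 x1 x2 (fun _ => x3) c3 (fun _ => x1) (fun _ => x2)).
  simpl in L1, L2, L3.
  specialize (L1 ltac:(exists r; split; auto; intros s u w z [HS1 HS2] Hu Hw Hz; split; auto; split; auto; apply Hnr; auto)).
  specialize (L1 ltac:(intros s u w z HQ; apply (Hpd _ _ _ _ HQ))).
  specialize (L1 ltac:(intros e He; destruct (Hc1 tau x1 x2 x3 HinD e He) as [d [Hd H]]; exists d; split; auto;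
     intros s u w z HQ ? ? ? ?; apply H; auto)).
  specialize (L1 HS (lim_const _ x1) Lc1 Lc2 Lc3).
  specialize (L2 ltac:(exists r; split; auto; intros s u w z [HS1 HS2] Hu Hw Hz; split; auto; split; auto; apply Hnr; auto)).
  specialize (L2 ltac:(intros s u w z HQ; apply (Hpd _ _ _ _ HQ))).
  specialize (L2 ltac:(intros e He; destruct (Hc2 tau x1 x2 x3 HinD e He) as [d [Hd H]]; exists d; split; auto;
     intros s u w z HQ ? ? ? ?; apply H; auto)).
  specialize (L2 HS (lim_const _ x2) Lc2 (lim_const _ x1) Lc3).
  specialize (L3 ltac:(exists r; split; auto; intros s u w z [HS1 HS2] Hu Hw Hz; split; auto; split; auto; apply Hnr; auto)).
  specialize (L3 ltac:(intros s u w z HQ; apply (Hpd _ _ _ _ HQ))).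
  specialize (L3 ltac:(intros e He; destruct (Hc3 tau x1 x2 x3 HinD e He) as [d [Hd H]]; exists d; split; auto;
     intros s u w z HQ ? ? ? ?; apply H; auto)).
  specialize (L3 HS (lim_const _ x3) Lc3 (lim_const _ x1) (lim_const _ x2)).
  assert (L4 : is_deriv_in 1 (Finite b) (fun s => g s x1 x2 x3) tau A).
  { eapply D_restrict; [|exact Ht]. intros; simpl; auto. }
  unfold is_deriv_in in *.
  eapply filterlim_ext_loc; [| exact (lim_plus (Fw 1 b tau) _ _ _ _ (lim_plus (Fw 1 b tau) _ _ _ _
     (lim_plus (Fw 1 b tau) _ _ _ _ (lim_mult (Fw 1 b tau) _ _ _ _ L1 Hd1) (lim_mult (Fw 1 b tau) _ _ _ _ L2 Hd2))
     (lim_mult (Fw 1 b tau) _ _ _ _ L3 Hd3)) L4)].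
  generalize (Fw_dom 1 b tau). apply filter_imp. intros s [_ Hs]. simpl.
  assert (Hne : s - tau <> 0) by lra.
  pose proof (slope_mul (fun y => g s y (c2 s) (c3 s)) x1 (c1 s) (g1 tau x1 x2 x3) (s - tau) Hne) as E1.
  pose proof (slope_mul (fun y => g s x1 y (c3 s)) x2 (c2 s) (g2 tau x1 x2 x3) (s - tau) Hne) as E2.
  pose proof (slope_mul (fun y => g s x1 x2 y) x3 (c3 s) (g3 tau x1 x2 x3) (s - tau) Hne) as E3.
  simpl in E1, E2, E3. unfold x1, x2, x3 in *. rewrite E1, E2, E3. unfold Rdiv; ring.
Qed.

Lemma sq_deriv y : is_derive (fun y => y ^ 2) y (2 * y).
Proof. auto_derive. auto. ring. Qed.

Lemma nrm2_pos y1 y2 y3 : nrm2 y1 y2 y3 <> 0 -> 0 < nrm2 y1 y2 y3.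
Proof. intros H. unfold nrm2 in *. pose proof (pow2_ge_0 y1). pose proof (pow2_ge_0 y2). pose proof (pow2_ge_0 y3). lra. Qed.

Lemma Rpower_pos x y : 0 < Rpower x y.
Proof. unfold Rpower. apply exp_pos. Qed.

Theorem lemmat
  (beta gamma K iota omega : R) (tm T : Rbar) (f f0 : R -> R) (d : R -> R)
  (rho v1 v2 v3 s : field) :
  0 < beta -> 0 < gamma -> 0 < K -> 0 < iota < 1 ->
  (forall r, 0 < r -> 0 < 1 + beta * d r) ->
  ode_maximal tm beta gamma f f0 ->
  Rbar_lt (Finite 1) T -> Rbar_le T tm ->
  (* regularity and positivity *)
  C1_on_D T rho -> C1_on_D T v1 -> C1_on_D T v2 -> C1_on_D T v3 -> C1_on_D T s ->
  (forall t x1 x2 x3, inD T t x1 x2 x3 -> 0 < rho t x1 x2 x3) ->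
  (* continuity equation  d_t rho + d_i (rho v^i) = 0 *)
  (forall t x1 x2 x3, inD T t x1 x2 x3 ->
     exists a b1 b2 b3,
       pd_t rho t x1 x2 x3 a /\
       pd_1 (fun t y1 y2 y3 => rho t y1 y2 y3 * v1 t y1 y2 y3) t x1 x2 x3 b1 /\
       pd_2 (fun t y1 y2 y3 => rho t y1 y2 y3 * v2 t y1 y2 y3) t x1 x2 x3 b2 /\
       pd_3 (fun t y1 y2 y3 => rho t y1 y2 y3 * v3 t y1 y2 y3) t x1 x2 x3 b3 /\
       a + b1 + b2 + b3 = 0) ->
  (forall x1 x2 x3, nrm2 x1 x2 x3 <> 0 ->
     rho 1 x1 x2 x3 = iota ^ 3 / (6 * PI) * (1 + beta * d (sqrt (nrm2 x1 x2 x3)))) ->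
  (* transport equation for s, with vcheck^i = v^i - (2/(3t) - f0/(3(1+f))) x^i *)
  (let c t := 2 / (3 * t) - f0 t / (3 * (1 + f t)) in
   let vc1 : field := fun t y1 y2 y3 => v1 t y1 y2 y3 - c t * y1 in
   let vc2 : field := fun t y1 y2 y3 => v2 t y1 y2 y3 - c t * y2 in
   let vc3 : field := fun t y1 y2 y3 => v3 t y1 y2 y3 - c t * y3 in
   forall t x1 x2 x3, inD T t x1 x2 x3 ->
     exists a c1 c2 c3 e1 e2 e3,
       pd_t s t x1 x2 x3 a /\
       pd_1 s t x1 x2 x3 c1 /\ pd_2 s t x1 x2 x3 c2 /\ pd_3 s t x1 x2 x3 c3 /\
       pd_1 vc1 t x1 x2 x3 e1 /\ pd_2 vc2 t x1 x2 x3 e2 /\ pd_3 vc3 t x1 x2 x3 e3 /\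
       a + (v1 t x1 x2 x3 * c1 + v2 t x1 x2 x3 * c2 + v3 t x1 x2 x3 * c3)
       = - (2 / 3 + omega) * (e1 + e2 + e3)
         + 2 * (vc1 t x1 x2 x3 * x1 + vc2 t x1 x2 x3 * x2 + vc3 t x1 x2 x3 * x3)
             / nrm2 x1 x2 x3) ->
  (forall x1 x2 x3, nrm2 x1 x2 x3 <> 0 ->
     s 1 x1 x2 x3 =
       ln (Rpower (1 + beta * d (sqrt (nrm2 x1 x2 x3))) (2 / 3 + omega)
           / Rpower (1 + beta) omega * nrm2 x1 x2 x3)) ->
  (* every point lies on an integral curve of d_t + v^i d_i starting at t = 1 *)
  (forall t x1 x2 x3, inD T t x1 x2 x3 ->
     exists c1 c2 c3 : R -> R,
       (forall tau, 1 <= tau <= t ->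
          nrm2 (c1 tau) (c2 tau) (c3 tau) <> 0 /\
          is_deriv_in 1 (Finite t) c1 tau (v1 tau (c1 tau) (c2 tau) (c3 tau)) /\
          is_deriv_in 1 (Finite t) c2 tau (v2 tau (c1 tau) (c2 tau) (c3 tau)) /\
          is_deriv_in 1 (Finite t) c3 tau (v3 tau (c1 tau) (c2 tau) (c3 tau))) /\
       c1 t = x1 /\ c2 t = x2 /\ c3 t = x3) ->
  (* conclusion *)
  forall t x1 x2 x3, inD T t x1 x2 x3 ->
    let rhoo := iota ^ 3 / (6 * PI * t ^ 2) in
    let vrho := rho t x1 x2 x3 / rhoo - 1 in
    s t x1 x2 x3 =
      ln (Rpower t (- (4 / 3)) * Rpower (1 + vrho) (2 / 3 + omega)
          / Rpower (1 + f t) omega * nrm2 x1 x2 x3) /\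
    K * exp (s t x1 x2 x3) * Rpower (rho t x1 x2 x3) (4 / 3) =
      K * Rpower t (- (4 / 3)) * Rpower (1 + vrho) (2 / 3 + omega)
        / Rpower (1 + f t) omega * nrm2 x1 x2 x3 * Rpower (rho t x1 x2 x3) (4 / 3).
Proof.
  intros Hb Hg HK Hi Hd Hode H1T HTtm HCrho HCv1 HCv2 HCv3 HCs Hpos Hcont Hrho1 Hseq Hs1 Hcurve t x1 x2 x3 HD rhoo vrho.
  destruct Hode as [[f1 [Hf [_ [Hf1 Hf01]]]] _].
  destruct (Hcurve t x1 x2 x3 HD) as [c1 [c2 [c3 [Hc [E1 [E2 E3]]]]]].
  destruct HD as [Ht1 [HtT Hnz]].
  destruct HCs as [st [s1 [s2 [s3 [Hsp [_ [_ [Hs1c [Hs2c Hs3c]]]]]]]]].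
  destruct HCrho as [rt [r1 [r2 [r3 [Hrp [_ [_ [Hr1c [Hr2c Hr3c]]]]]]]]].
  destruct HCv1 as [v1t [v11 [v12 [v13 [Hv1p _]]]]].
  destruct HCv2 as [v2t [v21 [v22 [v23 [Hv2p _]]]]].
  destruct HCv3 as [v3t [v31 [v32 [v33 [Hv3p _]]]]].
  assert (HtT' : Rbar_lt (Finite t) T) by exact HtT.
  assert (HtauT : forall tau, 1 <= tau <= t -> Rbar_lt (Finite tau) T).
  { intros tau Htau. apply (Rbar_lt_le_trans' tau t); auto; lra. }
  assert (Htautm : forall tau, 1 <= tau <= t -> Rbar_lt (Finite tau) tm).
  { intros tau Htau. eapply Rbar_lt_le_trans; [apply HtauT; auto| exact HTtm]. }
  assert (Hfd : forall tau, 1 <= tau <= t -> is_deriv_in 1 (Finite t) f tau (f0 tau)).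
  { intros tau Htau. destruct (Hf tau ltac:(lra) (Htautm tau Htau)) as [H _].
    eapply D_restrict; [|exact H]. intros; simpl; auto. }
  assert (Hfpos : forall tau, 1 <= tau <= t -> 0 < 1 + f tau).
  { apply (pos_prop 1 t (fun tau => 1 + f tau)).
    - lra.
    - intros tau Htau. eexists. exact (D_plus 1 t (fun _ => 1) f tau _ _ (D_const 1 t 1 tau) (Hfd tau Htau)).
    - intros tau Htau. destruct (Hf tau ltac:(lra) (Htautm tau Htau)) as [_ [_ [H _]]]. exact H.
    - rewrite Hf1. lra. }
  set (p := 2 / 3 + omega).
  set (F := fun sg => s sg (c1 sg) (c2 sg) (c3 sg) + 4 / 3 * ln sg
      + (- p) * ln (rho sg (c1 sg) (c2 sg) (c3 sg)) + (- (2 * p)) * ln sg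
      + omega * ln (1 + f sg) + (-1) * ln (nrm2 (c1 sg) (c2 sg) (c3 sg))).
  assert (HF : F t = F 1).
  { apply D_zero. lra. intros tau Htau.
    destruct (Hc tau Htau) as [Hnzt [Hcd1 [Hcd2 Hcd3]]].
    assert (HinD : inD T tau (c1 tau) (c2 tau) (c3 tau)) by (split; [lra| split; auto]).
    destruct (Hcont tau _ _ _ HinD) as [ar [b1 [b2 [b3 [Har [Hb1 [Hb2 [Hb3 Hsum]]]]]]]].
    pose proof (Hseq tau _ _ _ HinD) as Hse. cbv zeta in Hse.
    destruct Hse as [as_ [cs1 [cs2 [cs3 [e1 [e2 [e3 [Has [Hcs1 [Hcs2 [Hcs3 [He1 [He2 [He3 Heq]]]]]]]]]]]]]].
    destruct (Hsp tau _ _ _ HinD) as [_ [Hs1' [Hs2' Hs3']]].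
    destruct (Hrp tau _ _ _ HinD) as [_ [Hr1' [Hr2' Hr3']]].
    destruct (Hv1p tau _ _ _ HinD) as [_ [Hv11 _]].
    destruct (Hv2p tau _ _ _ HinD) as [_ [_ [Hv22 _]]].
    destruct (Hv3p tau _ _ _ HinD) as [_ [_ [_ Hv33]]].
    assert (Ecs1 : cs1 = s1 tau (c1 tau) (c2 tau) (c3 tau)).
    { rewrite <- (is_derive_unique _ _ _ Hcs1). apply is_derive_unique. exact Hs1'. }
    assert (Ecs2 : cs2 = s2 tau (c1 tau) (c2 tau) (c3 tau)).
    { rewrite <- (is_derive_unique _ _ _ Hcs2). apply is_derive_unique. exact Hs2'. }
    assert (Ecs3 : cs3 = s3 tau (c1 tau) (c2 tau) (c3 tau)).
    { rewrite <- (is_derive_unique _ _ _ Hcs3). apply is_derive_unique. exact Hs3'. }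
    set (cc := 2 / (3 * tau) - f0 tau / (3 * (1 + f tau))) in *.
    assert (Ee1 : e1 = v11 tau (c1 tau) (c2 tau) (c3 tau) - cc * 1).
    { rewrite <- (is_derive_unique _ _ _ He1). apply is_derive_unique.
      exact (is_derive_minus _ _ _ _ _ Hv11 (is_derive_scal _ _ cc _ (is_derive_id _))). }
    assert (Ee2 : e2 = v22 tau (c1 tau) (c2 tau) (c3 tau) - cc * 1).
    { rewrite <- (is_derive_unique _ _ _ He2). apply is_derive_unique.
      exact (is_derive_minus _ _ _ _ _ Hv22 (is_derive_scal _ _ cc _ (is_derive_id _))). }
    assert (Ee3 : e3 = v33 tau (c1 tau) (c2 tau) (c3 tau) - cc * 1).
    { rewrite <- (is_derive_unique _ _ _ He3). apply is_derive_unique.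
      exact (is_derive_minus _ _ _ _ _ Hv33 (is_derive_scal _ _ cc _ (is_derive_id _))). }
    assert (Eb1 : b1 = r1 tau (c1 tau) (c2 tau) (c3 tau) * v1 tau (c1 tau) (c2 tau) (c3 tau)
                      + rho tau (c1 tau) (c2 tau) (c3 tau) * v11 tau (c1 tau) (c2 tau) (c3 tau)).
    { rewrite <- (is_derive_unique _ _ _ Hb1). apply is_derive_unique.
      exact (is_derive_mult _ _ _ _ _ Hr1' Hv11 Rmult_comm). }
    assert (Eb2 : b2 = r2 tau (c1 tau) (c2 tau) (c3 tau) * v2 tau (c1 tau) (c2 tau) (c3 tau)
                      + rho tau (c1 tau) (c2 tau) (c3 tau) * v22 tau (c1 tau) (c2 tau) (c3 tau)).
    { rewrite <- (is_derive_unique _ _ _ Hb2). apply is_derive_unique.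
      exact (is_derive_mult _ _ _ _ _ Hr2' Hv22 Rmult_comm). }
    assert (Eb3 : b3 = r3 tau (c1 tau) (c2 tau) (c3 tau) * v3 tau (c1 tau) (c2 tau) (c3 tau)
                      + rho tau (c1 tau) (c2 tau) (c3 tau) * v33 tau (c1 tau) (c2 tau) (c3 tau)).
    { rewrite <- (is_derive_unique _ _ _ Hb3). apply is_derive_unique.
      exact (is_derive_mult _ _ _ _ _ Hr3' Hv33 Rmult_comm). }
    assert (Hsp3 : forall sg y1 y2 y3, inD T sg y1 y2 y3 -> pd_1 s sg y1 y2 y3 (s1 sg y1 y2 y3) /\
       pd_2 s sg y1 y2 y3 (s2 sg y1 y2 y3) /\ pd_3 s sg y1 y2 y3 (s3 sg y1 y2 y3)).
    { intros sg y1 y2 y3 H; destruct (Hsp sg y1 y2 y3 H) as [_ H']; exact H'. }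
    assert (Hrp3 : forall sg y1 y2 y3, inD T sg y1 y2 y3 -> pd_1 rho sg y1 y2 y3 (r1 sg y1 y2 y3) /\
       pd_2 rho sg y1 y2 y3 (r2 sg y1 y2 y3) /\ pd_3 rho sg y1 y2 y3 (r3 sg y1 y2 y3)).
    { intros sg y1 y2 y3 H; destruct (Hrp sg y1 y2 y3 H) as [_ H']; exact H'. }
    assert (DS := chain T t s s1 s2 s3 c1 c2 c3 tau as_ _ _ _ HtT' Htau Hsp3 Hs1c Hs2c Hs3c Hnzt Has Hcd1 Hcd2 Hcd3).
    assert (DR := chain T t rho r1 r2 r3 c1 c2 c3 tau ar _ _ _ HtT' Htau Hrp3 Hr1c Hr2c Hr3c Hnzt Har Hcd1 Hcd2 Hcd3).
    assert (Hrpos : 0 < rho tau (c1 tau) (c2 tau) (c3 tau)) by (apply Hpos; auto).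
    assert (DlnR := D_comp 1 t ln (fun sg => rho sg (c1 sg) (c2 sg) (c3 sg)) tau _ _ (is_derive_ln _ Hrpos) DR).
    assert (Dlnt := D_comp 1 t ln (fun sg => sg) tau _ _ (is_derive_ln tau ltac:(lra)) (D_idf 1 t tau)).
    assert (D1f := D_plus 1 t (fun _ => 1) f tau _ _ (D_const 1 t 1 tau) (Hfd tau Htau)).
    assert (Dlnf := D_comp 1 t ln (fun sg => 1 + f sg) tau _ _ (is_derive_ln _ (Hfpos tau Htau)) D1f).
    assert (Dq1 := D_comp 1 t (fun y => y ^ 2) c1 tau _ _ (sq_deriv _) Hcd1).
    assert (Dq2 := D_comp 1 t (fun y => y ^ 2) c2 tau _ _ (sq_deriv _) Hcd2).
    assert (Dq3 := D_comp 1 t (fun y => y ^ 2) c3 tau _ _ (sq_deriv _) Hcd3).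
    assert (Dn := D_plus 1 t _ _ tau _ _ (D_plus 1 t _ _ tau _ _ Dq1 Dq2) Dq3).
    assert (Dn' : is_deriv_in 1 (Finite t) (fun sg => nrm2 (c1 sg) (c2 sg) (c3 sg)) tau
       (2 * c1 tau * v1 tau (c1 tau) (c2 tau) (c3 tau) + 2 * c2 tau * v2 tau (c1 tau) (c2 tau) (c3 tau)
        + 2 * c3 tau * v3 tau (c1 tau) (c2 tau) (c3 tau))).
    { eapply D_ext; [| |exact Dn]. intros; reflexivity. reflexivity. }
    assert (Hnpos := nrm2_pos _ _ _ Hnzt).
    assert (Dlnn := D_comp 1 t ln (fun sg => nrm2 (c1 sg) (c2 sg) (c3 sg)) tau _ _ (is_derive_ln _ Hnpos) Dn').
    assert (DF := D_plus 1 t _ _ tau _ _ (D_plus 1 t _ _ tau _ _ (D_plus 1 t _ _ tau _ _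
       (D_plus 1 t _ _ tau _ _ (D_plus 1 t _ _ tau _ _ DS (D_scal 1 t _ (4/3) tau _ Dlnt))
          (D_scal 1 t _ (- p) tau _ DlnR)) (D_scal 1 t _ (- (2 * p)) tau _ Dlnt))
          (D_scal 1 t _ omega tau _ Dlnf)) (D_scal 1 t _ (-1) tau _ Dlnn)).
    eapply D_ext; [| |exact DF]. intros; reflexivity.
    subst cs1 cs2 cs3 e1 e2 e3 b1 b2 b3.
    assert (Ear : ar = - (r1 tau (c1 tau) (c2 tau) (c3 tau) * v1 tau (c1 tau) (c2 tau) (c3 tau)
                      + rho tau (c1 tau) (c2 tau) (c3 tau) * v11 tau (c1 tau) (c2 tau) (c3 tau)
     + (r2 tau (c1 tau) (c2 tau) (c3 tau) * v2 tau (c1 tau) (c2 tau) (c3 tau)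
                      + rho tau (c1 tau) (c2 tau) (c3 tau) * v22 tau (c1 tau) (c2 tau) (c3 tau))
     + (r3 tau (c1 tau) (c2 tau) (c3 tau) * v3 tau (c1 tau) (c2 tau) (c3 tau)
                      + rho tau (c1 tau) (c2 tau) (c3 tau) * v33 tau (c1 tau) (c2 tau) (c3 tau)))) by lra.
    assert (Eas : as_ = - (v1 tau (c1 tau) (c2 tau) (c3 tau) * s1 tau (c1 tau) (c2 tau) (c3 tau)
       + v2 tau (c1 tau) (c2 tau) (c3 tau) * s2 tau (c1 tau) (c2 tau) (c3 tau)
       + v3 tau (c1 tau) (c2 tau) (c3 tau) * s3 tau (c1 tau) (c2 tau) (c3 tau)) +
       (- (2 / 3 + omega) * (v11 tau (c1 tau) (c2 tau) (c3 tau) - cc * 1 + (v22 tau (c1 tau) (c2 tau) (c3 tau) - cc * 1)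
          + (v33 tau (c1 tau) (c2 tau) (c3 tau) - cc * 1)) +
       2 * ((v1 tau (c1 tau) (c2 tau) (c3 tau) - cc * c1 tau) * c1 tau + (v2 tau (c1 tau) (c2 tau) (c3 tau) - cc * c2 tau) * c2 tau
          + (v3 tau (c1 tau) (c2 tau) (c3 tau) - cc * c3 tau) * c3 tau) / nrm2 (c1 tau) (c2 tau) (c3 tau))) by lra.
    rewrite Ear, Eas. unfold cc, p. unfold nrm2 in *.
    assert (1 + f tau <> 0) by (specialize (Hfpos tau Htau); lra).
    field. repeat split; lra.
  }
  unfold F in HF. rewrite E1, E2, E3 in HF.
  destruct (Hc 1 ltac:(lra)) as [Hnz1 _].
  rewrite Hs1, Hrho1, Hf1, ln_1 in HF by auto.
  set (n1 := nrm2 (c1 1) (c2 1) (c3 1)) in *.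
  assert (Hn1 := nrm2_pos _ _ _ Hnz1). fold n1 in Hn1.
  assert (HX : 0 < 1 + beta * d (sqrt n1)) by (apply Hd; apply sqrt_lt_R0; auto).
  set (X := 1 + beta * d (sqrt n1)) in *.
  assert (Hk : 0 < iota ^ 3 / (6 * PI)).
  { pose proof PI_RGT_0. apply Rdiv_lt_0_compat; [apply pow_lt; lra| lra]. }
  rewrite ln_mult in HF by (try apply Rdiv_lt_0_compat; try apply Rpower_pos; auto).
  rewrite ln_div in HF by (apply Rpower_pos).
  rewrite ln_mult in HF by auto.
  rewrite !ln_Rpower in HF.
  assert (Hrt := Hpos t x1 x2 x3 (conj Ht1 (conj HtT Hnz))).
  assert (Hnt := nrm2_pos _ _ _ Hnz).
  assert (Hft := Hfpos t ltac:(lra)).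
  assert (Hrhoo : 0 < rhoo).
  { unfold rhoo. pose proof PI_RGT_0. apply Rdiv_lt_0_compat; [apply pow_lt; lra| ]. 
    pose proof (pow_lt t 2 ltac:(lra)). nra. }
  assert (Hvr : 1 + vrho = rho t x1 x2 x3 / rhoo) by (unfold vrho; ring).
  assert (Hvrpos : 0 < 1 + vrho) by (rewrite Hvr; apply Rdiv_lt_0_compat; auto).
  assert (Hrhoo' : rhoo = iota ^ 3 / (6 * PI) / t ^ 2).
  { pose proof PI_RGT_0. unfold rhoo. field. repeat split; lra. }
  assert (Hlnr : ln (1 + vrho) = ln (rho t x1 x2 x3) - (ln (iota ^ 3 / (6 * PI)) - 2 * ln t)).
  { rewrite Hvr, ln_div by auto. rewrite Hrhoo', ln_div by (auto; apply pow_lt; lra).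
    rewrite ln_pow by lra. replace (INR 2) with 2 by (simpl; ring). ring. }
  assert (Main : s t x1 x2 x3 =
      ln (Rpower t (- (4 / 3)) * Rpower (1 + vrho) p / Rpower (1 + f t) omega * nrm2 x1 x2 x3)).
  { rewrite ln_mult by (try apply Rdiv_lt_0_compat; try apply Rmult_lt_0_compat; try apply Rpower_pos; auto).
    rewrite ln_div by (try apply Rmult_lt_0_compat; try apply Rpower_pos; auto).
    rewrite ln_mult by (apply Rpower_pos).
    rewrite !ln_Rpower. rewrite Hlnr. unfold p in *. nra. }
  split; auto.
  rewrite Main, exp_ln.
  - unfold Rdiv; ring.
  - apply Rmult_lt_0_compat; auto. apply Rdiv_lt_0_compat; [apply Rmult_lt_0_compat|]; apply Rpower_pos.
Qed.
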